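(* Let $\mathrm{Var}$ be a variety of algebras with one binary multiplication defined by multilinear identities. If a multilinear polynomial $f$ in the operations $\prec,\succ$ is an identity of all algebras over the operad $\mathrm{Var}\circ\mathrm{Nov}$ (under the identification described below), then $f$ is a derived identity of $\mathrm{Var}$.
   Context: For an algebra $A$ with derivation $d$, $A^{(d)}=(A,\prec,\succ)$ with $x\prec y=x\,d(y)$, $x\succ y=d(x)\,y$; $f$ is a derived identity of $\mathrm{Var}$ if $f=0$ on $A^{(d)}$ for all $A\in\mathrm{Var}$ and all derivations $d$ of $A$. The operad $\mathrm{Var}$ has components $\mathrm{Var}(n)$ = multilinear elements of degree $n$ in the free $\mathrm{Var}$-algebra on $x_1,x_2,\dots$. $\mathrm{Nov}$ is the operad of Novikov algebras: one operation $\circ$ with $(a\circ b)\circ c-a\circ(b\circ c)=(b\circ a)\circ c-b\circ(a\circ c)$ and $(a\circ b)\circ c=(a\circ c)\circ b$. The Hadamard product $\mathcal P\otimes\mathcal Q$ has components $\mathcal P(n)\otimes\mathcal Q(n)$ with componentwise composition; the Manin white product $\mathcal P\circ\mathcal Q$ is the suboperad generated by $\mathcal P(2)\otimes\mathcal Q(2)$. The operations of $\mathrm{Var}\circ\mathrm{Nov}$ are identified as $x_1\prec x_2=x_1x_2\otimes(x_1\circ x_2)$, $x_1\succ x_2=x_1x_2\otimes(x_2\circ x_1)$. *)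

(* Defs.v *)
From HB Require Import structures.
From mathcomp Require Import all_boot all_order all_algebra.
Set Implicit Arguments. Unset Strict Implicit. Unset Printing Implicit Defensive.
Import Order.TTheory GRing.Theory Num.Theory.
Local Open Scope ring_scope.

Inductive mterm := MVar of nat | MMul of mterm & mterm.
Inductive dterm := DVar of nat | DPrec of dterm & dterm | DSucc of dterm & dterm.

Fixpoint mleaves (t : mterm) : seq nat :=
  match t with MVar i => [:: i] | MMul a b => mleaves a ++ mleaves b end.
Fixpoint dleaves (t : dterm) : seq nat :=
  match t with
  | DVar i => [:: i]
  | DPrec a b => dleaves a ++ dleaves b
  | DSucc a b => dleaves a ++ dleaves b end.

Definition mpoly (K : fieldType) := seq (K * mterm).
Definition dpoly (K : fieldType) := seq (K * dterm).

Definition mmultilinear (K : fieldType) (n : nat) (f : mpoly K) : Prop :=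
  all (fun p => perm_eq (mleaves p.2) (iota 0 n)) f.
Definition dmultilinear (K : fieldType) (n : nat) (f : dpoly K) : Prop :=
  all (fun p => perm_eq (dleaves p.2) (iota 0 n)) f.

Record algebra (K : fieldType) := Algebra {
  carrier :> lmodType K;
  amul : carrier -> carrier -> carrier;
  amulDl : forall a b c, amul (a + b) c = amul a c + amul b c;
  amulDr : forall a b c, amul a (b + c) = amul a b + amul a c;
  amulZl : forall (k : K) a b, amul (k *: a) b = k *: amul a b;
  amulZr : forall (k : K) a b, amul a (k *: b) = k *: amul a b
}.

Fixpoint meval (K : fieldType) (A : algebra K) (x : nat -> A) (t : mterm) : A :=
  match t with
  | MVar i => x i
  | MMul a b => amul (meval x a) (meval x b)
  end.

Definition mpeval (K : fieldType) (A : algebra K) (x : nat -> A) (f : mpoly K) : A :=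
  \sum_(p <- f) p.1 *: meval x p.2.

Definition is_identity (K : fieldType) (A : algebra K) (f : mpoly K) : Prop :=
  forall x : nat -> A, mpeval x f = 0.

Definition multilinear_set (K : fieldType) (S : mpoly K -> Prop) : Prop :=
  forall g, S g -> exists n, mmultilinear n g.

Definition in_variety (K : fieldType) (S : mpoly K -> Prop) (A : algebra K) : Prop :=
  forall g, S g -> is_identity A g.

Definition novikov (K : fieldType) (N : algebra K) : Prop :=
  (forall a b c : N,
     amul (amul a b) c - amul a (amul b c) = amul (amul b a) c - amul b (amul a c))
  /\ (forall a b c : N, amul (amul a b) c = amul (amul a c) b).

Definition derivation (K : fieldType) (A : algebra K) (d : A -> A) : Prop :=
  (forall (k : K) (a b : A), d (k *: a + b) = k *: d a + d b)
  /\ (forall a b : A, d (amul a b) = amul (d a) b + amul a (d b)).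

Fixpoint deval (K : fieldType) (A : algebra K) (d : A -> A) (x : nat -> A) (t : dterm) : A :=
  match t with
  | DVar i => x i
  | DPrec a b => amul (deval d x a) (d (deval d x b))
  | DSucc a b => amul (d (deval d x a)) (deval d x b)
  end.

Definition derived_identity (K : fieldType) (S : mpoly K -> Prop) (f : dpoly K) : Prop :=
  forall (A : algebra K) (d : A -> A), in_variety S A -> derivation d ->
  forall x : nat -> A, \sum_(p <- f) p.1 *: deval d x p.2 = 0.

(* The identification of Var o Nov inside Var (x) Nov:
   x1 prec x2 = x1x2 (x) (x1 o x2),  x1 succ x2 = x1x2 (x) (x2 o x1).
   to_pair t = (Var-component, Nov-component) of the monomial t. *)
Fixpoint to_pair (t : dterm) : mterm * mterm :=
  match t with
  | DVar i => (MVar i, MVar i)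
  | DPrec a b => (MMul (to_pair a).1 (to_pair b).1, MMul (to_pair a).2 (to_pair b).2)
  | DSucc a b => (MMul (to_pair a).1 (to_pair b).1, MMul (to_pair b).2 (to_pair a).2)
  end.

(* Since Var o Nov is a suboperad of
   Var (x) Nov, this says that the image of f in Var(n) (x) Nov(n) vanishes; equivalently
   f vanishes on every Hadamard product algebra A (x) N (A in Var, N Novikov).
   The tensor product A (x) N is expressed through its universal property:
   every bilinear map B : A -> N -> W kills the value of f at simple tensors
   a_i (x) u_i (which suffices as f is multilinear). *)
Definition bilinear_map (K : fieldType) (A N : algebra K) (W : lmodType K)
  (B : A -> N -> W) : Prop :=
  (forall u : N, forall (k : K) (a b : A), B (k *: a + b) u = k *: B a u + B b u)
  /\ (forall a : A, forall (k : K) (u v : N), B a (k *: u + v) = k *: B a u + B a v).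

Definition VarNov_identity (K : fieldType) (S : mpoly K -> Prop) (f : dpoly K) : Prop :=
  forall (A N : algebra K) (W : lmodType K) (B : A -> N -> W),
  in_variety S A -> novikov N -> bilinear_map B ->
  forall (a : nat -> A) (u : nat -> N),
  \sum_(p <- f) p.1 *: B (meval a (to_pair p.2).1) (meval u (to_pair p.2).2) = 0.

(* Main.v *)
From HB Require Import structures.
From mathcomp Require Import all_boot all_order all_algebra.
From mathcomp Require Import mpoly.
From mathcomp Require Import boolp functions.
From mathcomp Require Import ring.
Require Import Defs.
Import GRing.Theory.
Set Implicit Arguments. Unset Strict Implicit. Unset Printing Implicit Defensive.
Local Open Scope ring_scope.

Section Lin.
Variables (K : fieldType) (k : nat) (V : lmodType K).
Implicit Types (p q : {mpoly K[k]}).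

Definition lin (G : 'X_{1..k} -> V) p : V := \sum_(m <- msupp p) p@_m *: G m.

Lemma lin_r G p (r : seq 'X_{1..k}) : uniq r -> {subset msupp p <= r} ->
  \sum_(m <- r) p@_m *: G m = lin G p.
Proof.
move=> ur sub; rewrite (bigID (fun m => m \in msupp p)) /=.
rewrite [X in _ + X]big1 ?addr0; last by move=> m /memN_msupp_eq0 ->; rewrite scale0r.
rewrite -big_filter /lin; apply: perm_big.
apply: uniq_perm; [exact: filter_uniq | exact: msupp_uniq | ].
move=> m; rewrite mem_filter; case: (boolP (m \in msupp p)) => //= h; by rewrite (sub _ h).
Qed.

Lemma linD G c p q : lin G (c *: p + q) = c *: lin G p + lin G q.
Proof.
set r := undup (msupp p ++ msupp q).
have ur : uniq r by apply: undup_uniq.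
rewrite -(@lin_r G (c *: p + q) r ur); last first.
  move=> m /msuppD_le; rewrite mem_cat => /orP [/msuppZ_le h|h];
  by rewrite mem_undup mem_cat h ?orbT.
rewrite -(@lin_r G p r ur); last by move=> m h; rewrite mem_undup mem_cat h.
rewrite -(@lin_r G q r ur); last by move=> m h; rewrite mem_undup mem_cat h orbT.
rewrite scaler_sumr -big_split /=; apply: eq_bigr => m _.
by rewrite mcoeffD mcoeffZ scalerDl scalerA.
Qed.

Lemma lin0 G : lin G 0 = 0.
Proof.
rewrite /lin (_ : msupp _ = [::]) ?big_nil //.
by apply/eqP; rewrite msupp_eq0.
Qed.

Lemma linZ G c p : lin G (c *: p) = c *: lin G p.
Proof. by rewrite -[c *: p]addr0 linD lin0 addr0. Qed.

Lemma linA G p q : lin G (p + q) = lin G p + lin G q.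
Proof. by move: (linD G 1 p q); rewrite !scale1r. Qed.

Lemma lin_sum G (I : Type) (r : seq I) (P : I -> {mpoly K[k]}) :
  lin G (\sum_(i <- r) P i) = \sum_(i <- r) lin G (P i).
Proof.
elim: r => [|i r IH]; first by rewrite !big_nil lin0.
by rewrite !big_cons linA IH.
Qed.

Lemma linX G m : lin G 'X_[m] = G m.
Proof. by rewrite /lin msuppX big_seq1 mcoeffX eqxx scale1r. Qed.

Lemma linF (G : 'X_{1..k} -> V) (c : K) (G1 G2 : 'X_{1..k} -> V) p :
  (forall m, G m = c *: G1 m + G2 m) -> lin G p = c *: lin G1 p + lin G2 p.
Proof.
move=> HG; rewrite /lin scaler_sumr -big_split /=; apply: eq_bigr => m _.
by rewrite HG scalerDr !scalerA mulrC.
Qed.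

Definition shiftop p (F : 'X_{1..k} -> V) : 'X_{1..k} -> V :=
  fun kap => lin (fun m => F (kap + m)%MM) p.

Lemma shiftX m F kap : shiftop 'X_[m] F kap = F (kap + m)%MM.
Proof. by rewrite /shiftop linX. Qed.

Lemma shift_mul p q F : shiftop (p * q) F = shiftop p (shiftop q F).
Proof.
apply/funext => kap; rewrite /shiftop.
rewrite {1}(mpolyE p) mulr_suml lin_sum [X in _ = X]/lin; apply: eq_bigr => m _.
rewrite -scalerAl linZ; congr (_ *: _).
rewrite {1}(mpolyE q) mulr_sumr lin_sum; apply: eq_bigr => e _.
by rewrite -scalerAr linZ -mpolyXD linX addmA.
Qed.

End Lin.
Section AlgLemmas.
Variables (K : fieldType) (A : algebra K).

Lemma amul0r (b : A) : amul (0 : A) b = 0.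
Proof. by have := amulZl 0 (0 : A) b; rewrite !scale0r. Qed.
Lemma amulr0 (b : A) : amul b (0 : A) = 0.
Proof. by have := amulZr 0 b (0 : A); rewrite !scale0r. Qed.

Lemma amul_sumr (I : Type) (r : seq I) (a : A) (F : I -> A) :
  amul a (\sum_(i <- r) F i) = \sum_(i <- r) amul a (F i).
Proof.
elim: r => [|i r IH]; first by rewrite !big_nil amulr0.
by rewrite !big_cons amulDr IH.
Qed.
Lemma amul_suml (I : Type) (r : seq I) (a : A) (F : I -> A) :
  amul (\sum_(i <- r) F i) a = \sum_(i <- r) amul (F i) a.
Proof.
elim: r => [|i r IH]; first by rewrite !big_nil amul0r.
by rewrite !big_cons amulDl IH.
Qed.

Lemma der0 (d : A -> A) : derivation d -> d 0 = 0.
Proof.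
move=> [Hl _]; have := Hl 1 0 0; rewrite !scale1r addr0 => H.
by apply/esym/(addIr (d 0)); rewrite add0r -H.
Qed.
Lemma derD (d : A -> A) : derivation d -> forall a b, d (a + b) = d a + d b.
Proof. by move=> [Hl _] a b; move: (Hl 1 a b); rewrite !scale1r. Qed.
Lemma der_sum (d : A -> A) : derivation d -> forall (I : Type) (r : seq I) (F : I -> A),
  d (\sum_(i <- r) F i) = \sum_(i <- r) d (F i).
Proof.
move=> Hd I r F; elim: r => [|i r IH]; first by rewrite !big_nil der0.
by rewrite !big_cons derD // IH.
Qed.
End AlgLemmas.

Section FunAlg.
Variables (K : fieldType) (A : algebra K) (T : Type).
Definition fmul (F G : T -> A) : T -> A := fun t => amul (F t) (G t).
Lemma fmulDl (a b c : T -> A) : fmul (a + b) c = fmul a c + fmul b c.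
Proof. by apply/funext => t; rewrite /fmul /= amulDl. Qed.
Lemma fmulDr (a b c : T -> A) : fmul a (b + c) = fmul a b + fmul a c.
Proof. by apply/funext => t; rewrite /fmul /= amulDr. Qed.
Lemma fmulZl (s : K) (a b : T -> A) : fmul (s *: a) b = s *: fmul a b.
Proof. by apply/funext => t; rewrite /fmul /= amulZl. Qed.
Lemma fmulZr (s : K) (a b : T -> A) : fmul a (s *: b) = s *: fmul a b.
Proof. by apply/funext => t; rewrite /fmul /= amulZr. Qed.
Definition funalg : algebra K := @Algebra K (T -> A : lmodType K) fmul fmulDl fmulDr fmulZl fmulZr.

Lemma meval_fun (x : nat -> funalg) (t : mterm) (s : T) :
  (meval x t : T -> A) s = meval (fun i => (x i : T -> A) s) t.
Proof. by elim: t => [i|a IHa b IHb] //=; rewrite /fmul IHa IHb. Qed.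

Lemma funalg_in_var (S : mpoly K -> Prop) : in_variety S A -> in_variety S funalg.
Proof.
move=> HA g Hg x; apply/funext => s.
rewrite /mpeval fct_sumE.
transitivity (mpeval (fun i => (x i : T -> A) s) g); last exact: (HA g Hg).
by rewrite /mpeval; apply: eq_bigr => p _; rewrite -meval_fun.
Qed.
End FunAlg.
Section NovPart.
Variables (K : fieldType) (n : nat).
Definition kk := (n + n).+1.
Definition zi (j : nat) : 'I_kk := inord j.
Definition yi (j : nat) : 'I_kk := inord (n + j).

Lemma zi_val j : (j < n)%N -> (zi j : nat) = j.
Proof. by move=> h; rewrite /zi inordK // ltnS (leq_trans (ltnW h)) // leq_addr. Qed.
Lemma yi_val j : (j < n)%N -> (yi j : nat) = (n + j)%N.
Proof. by move=> h; rewrite /yi inordK // ltnS leq_add2l ltnW. Qed.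
Lemma zi_eq i j : (i < n)%N -> (j < n)%N -> (zi i == zi j) = (i == j).
Proof. by move=> hi hj; rewrite -(inj_eq val_inj) /= !zi_val. Qed.
Lemma yi_eq i j : (i < n)%N -> (j < n)%N -> (yi i == yi j) = (i == j).
Proof. by move=> hi hj; rewrite -(inj_eq val_inj) /= !yi_val // eqn_add2l. Qed.
Lemma zy_eq i j : (i < n)%N -> (j < n)%N -> (zi i == yi j) = false.
Proof.
move=> hi hj; rewrite -(inj_eq val_inj) /= zi_val // yi_val //.
by apply/negbTE; rewrite neq_ltn (leq_trans hi) // leq_addr.
Qed.
Lemma yz_eq i j : (i < n)%N -> (j < n)%N -> (yi i == zi j) = false.
Proof. by move=> hi hj; rewrite eq_sym zy_eq. Qed.

Lemma subm_id (m : 'X_{1..kk}) : (m - m)%MM = 0%MM.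
Proof. by apply/mnmP => i; rewrite mnmBE mnm0E subnn. Qed.

Implicit Types (p q : {mpoly K[kk]}).

Definition DD p : {mpoly K[kk]} :=
  \sum_(i <- iota 0 n) 'X_(zi i) * 'X_(yi i) * mderiv (yi i) p.

Lemma DDlin c p q : DD (c *: p + q) = c *: DD p + DD q.
Proof.
rewrite /DD scaler_sumr -big_split; apply: eq_bigr => i _ /=.
by rewrite mderivD mderivZ mulrDr scalerAr.
Qed.
Lemma DD0 : DD 0 = 0.
Proof. by rewrite /DD big1 // => i _; rewrite mderiv0 mulr0. Qed.
Lemma DDA p q : DD (p + q) = DD p + DD q.
Proof. by move: (DDlin 1 p q); rewrite !scale1r. Qed.
Lemma DDZ c p : DD (c *: p) = c *: DD p.
Proof. by move: (DDlin c p 0); rewrite !addr0 DD0 addr0. Qed.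
Lemma DD_sum (I : Type) (r : seq I) (P : I -> {mpoly K[kk]}) :
  DD (\sum_(i <- r) P i) = \sum_(i <- r) DD (P i).
Proof.
elim: r => [|i r IH]; first by rewrite !big_nil DD0.
by rewrite !big_cons DDA IH.
Qed.
Lemma DDM p q : DD (p * q) = DD p * q + p * DD q.
Proof.
rewrite /DD mulr_suml mulr_sumr -big_split; apply: eq_bigr => i _ /=.
by rewrite mderivM; ring.
Qed.

Lemma DDXz j : (j < n)%N -> DD 'X_(zi j) = 0.
Proof.
move=> hj; rewrite /DD big1_seq // => i /andP [_]; rewrite mem_iota add0n => hi.
by rewrite mderivX mnm1E zy_eq // mulr0n scale0r mulr0.
Qed.

Lemma DDXy j : (j < n)%N -> DD 'X_(yi j) = 'X_(zi j) * 'X_(yi j).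
Proof.
move=> hj; rewrite /DD (bigD1_seq j) ?mem_iota ?iota_uniq //= big1_seq ?addr0.
  by rewrite mderivX mnm1E eqxx subm_id mpolyX0 scale1r mulr1.
move=> i /andP [hne]; rewrite mem_iota add0n => hi.
by rewrite mderivX mnm1E yi_eq // eq_sym (negbTE hne) mulr0n scale0r mulr0.
Qed.

Lemma NmulDl (a b c : {mpoly K[kk]}) : (a + b) * DD c = a * DD c + b * DD c.
Proof. by rewrite mulrDl. Qed.
Lemma NmulDr (a b c : {mpoly K[kk]}) : a * DD (b + c) = a * DD b + a * DD c.
Proof. by rewrite DDA mulrDr. Qed.
Lemma NmulZl (s : K) (a b : {mpoly K[kk]}) : (s *: a) * DD b = s *: (a * DD b).
Proof. by rewrite scalerAl. Qed.
Lemma NmulZr (s : K) (a b : {mpoly K[kk]}) : a * DD (s *: b) = s *: (a * DD b).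
Proof. by rewrite DDZ scalerAr. Qed.

Definition Nalg : algebra K :=
  @Algebra K ({mpoly K[kk]} : lmodType K) (fun u v => u * DD v) NmulDl NmulDr NmulZl NmulZr.

Lemma Nalg_nov : novikov Nalg.
Proof. by split => a b c /=; rewrite ?DDM; ring. Qed.

Definition Zs (L : seq nat) : {mpoly K[kk]} := \sum_(j <- L) 'X_(zi j).

Lemma DDZs L : all (fun j => j < n)%N L -> DD (Zs L) = 0.
Proof.
move=> /allP hL; rewrite /Zs DD_sum big1_seq // => j /andP [_ hj].
by rewrite DDXz // hL.
Qed.

Definition supp p (L : seq nat) :=
  forall m, m \in msupp p -> forall j, (j < n)%N -> j \notin L -> m (zi j) = 0%N.

Lemma supp_mono p L L' : {subset L <= L'} -> supp p L -> supp p L'.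
Proof.
move=> sub h m hm j hj hL; exact: (h m hm j hj (contra (sub j) hL)).
Qed.
Lemma supp_add p q L : supp p L -> supp q L -> supp (p + q) L.
Proof.
move=> hp hq m /msuppD_le; rewrite mem_cat => /orP [h|h]; [exact: hp|exact: hq].
Qed.
Lemma supp_mul p q L : supp p L -> supp q L -> supp (p * q) L.
Proof.
move=> hp hq m /msuppM_le /allpairsP [[m1 m2] /= [h1 h2 ->]] j hj hL.
by rewrite mnmDE (hp _ h1 j hj hL) (hq _ h2 j hj hL).
Qed.
Lemma supp_X (i : 'I_kk) L :
  (forall j, (j < n)%N -> j \notin L -> i != zi j) -> supp 'X_i L.
Proof.
move=> h m; rewrite msuppX mem_seq1 => /eqP -> j hj hL.
by rewrite mnm1E (negbTE (h j hj hL)).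
Qed.
Lemma supp_Zs L : all (fun j => j < n)%N L -> supp (Zs L) L.
Proof.
elim: L => [_|a L IH /andP [ha hL]].
  rewrite /Zs big_nil => m; rewrite (_ : msupp _ = [::]) //.
  by apply/eqP; rewrite msupp_eq0.
rewrite /Zs big_cons; apply: supp_add.
  apply: supp_X => j hj; rewrite in_cons negb_or => /andP [hne _].
  by rewrite zi_eq // eq_sym.
move: (IH hL); apply: supp_mono => x hx; by rewrite in_cons hx orbT.
Qed.

Definition uu (j : nat) : Nalg := 'X_(yi j).

Definition T2 (t : dterm) : {mpoly K[kk]} := meval (A:=Nalg) uu (to_pair t).2.

Definition okL (L : seq nat) := uniq L && all (fun j => j < n)%N L.

Lemma T2_props t : okL (dleaves t) ->
  DD (T2 t) = Zs (dleaves t) * T2 t /\ supp (T2 t) (dleaves t).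
Proof.
rewrite /okL; elim: t => [i|t1 IH1 t2 IH2|t1 IH1 t2 IH2] /=.
- rewrite andbT => hi; rewrite /T2 /= /uu /Zs big_seq1 DDXy //; split => //.
  by apply: supp_X => j hj _; rewrite yz_eq.
- rewrite cat_uniq all_cat => /andP [/and3P [u1 _ u2] /andP [a1 a2]].
  have [D1 S1] := IH1 (introT andP (conj u1 a1)).
  have [D2 S2] := IH2 (introT andP (conj u2 a2)).
  rewrite /T2 /= -/(T2 t1) -/(T2 t2) D2.
  have sub1 : {subset dleaves t1 <= dleaves t1 ++ dleaves t2}
    by move=> x hx; rewrite mem_cat hx.
  have sub2 : {subset dleaves t2 <= dleaves t1 ++ dleaves t2}
    by move=> x hx; rewrite mem_cat hx orbT.
  split.
    rewrite !DDM D1 DDZs // D2 /Zs big_cat /= -!/(Zs _); ring.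
  apply: supp_mul; first exact: supp_mono sub1 S1.
  apply: supp_mul; [exact: supp_mono sub2 (supp_Zs a2)|exact: supp_mono sub2 S2].
- rewrite cat_uniq all_cat => /andP [/and3P [u1 _ u2] /andP [a1 a2]].
  have [D1 S1] := IH1 (introT andP (conj u1 a1)).
  have [D2 S2] := IH2 (introT andP (conj u2 a2)).
  rewrite /T2 /= -/(T2 t1) -/(T2 t2) D1.
  have sub1 : {subset dleaves t1 <= dleaves t1 ++ dleaves t2}
    by move=> x hx; rewrite mem_cat hx.
  have sub2 : {subset dleaves t2 <= dleaves t1 ++ dleaves t2}
    by move=> x hx; rewrite mem_cat hx orbT.
  split.
    rewrite !DDM D2 DDZs // D1 /Zs big_cat /= -!/(Zs _); ring.
  apply: supp_mul; first exact: supp_mono sub2 S2.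
  apply: supp_mul; [exact: supp_mono sub1 (supp_Zs a1)|exact: supp_mono sub1 S1].
Qed.
End NovPart.
Section MainPart.
Variables (K : fieldType) (n : nat) (A : algebra K) (d : A -> A).
Hypothesis Hd : derivation d.
Variable (x : nat -> A).

Local Notation XX := 'X_{1..kk n}.

Definition xk (kap : XX) : nat -> A := fun j => iter (kap (zi n j)) d (x j).

Lemma loc t (kap kap' : XX) :
  (forall j, j \in dleaves t -> kap (zi n j) = kap' (zi n j)) ->
  deval d (xk kap) t = deval d (xk kap') t.
Proof.
elim: t => [i|t1 IH1 t2 IH2|t1 IH1 t2 IH2] /= h.
- by rewrite /xk h // mem_seq1.
- by rewrite IH1 ?IH2 // => j hj; apply: h; rewrite mem_cat hj ?orbT.
- by rewrite IH1 ?IH2 // => j hj; apply: h; rewrite mem_cat hj ?orbT.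
Qed.

Lemma shift_coord (kap : XX) i j : (i < n)%N -> (j < n)%N -> i != j ->
  (kap + U_(zi n j))%MM (zi n i) = kap (zi n i).
Proof.
by move=> hi hj hne; rewrite mnmDE mnm1E zi_eq // eq_sym (negbTE hne) addn0.
Qed.

Lemma leib t (kap : XX) : okL n (dleaves t) ->
  d (deval d (xk kap) t) =
  \sum_(j <- dleaves t) deval d (xk (kap + U_(zi n j))%MM) t.
Proof.
elim: t kap => [i|t1 IH1 t2 IH2|t1 IH1 t2 IH2] kap /=.
- rewrite /okL /= andbT => hi; rewrite big_seq1 /xk mnmDE mnm1E eqxx addn1.
  by [].
- rewrite /okL cat_uniq all_cat => /andP [/and3P [u1 dis u2] /andP [a1 a2]].
  have ok1 : okL n (dleaves t1) by rewrite /okL u1 a1.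
  have ok2 : okL n (dleaves t2) by rewrite /okL u2 a2.
  rewrite big_cat /= (proj2 Hd); congr (_ + _).
    rewrite (IH1 kap ok1) amul_suml; apply: eq_big_seq => j hj.
    congr amul; congr d; apply: loc => i hi.
    rewrite shift_coord ?(allP a1 j hj) ?(allP a2 i hi) //.
    by apply/eqP => e; move/hasPn: dis => /(_ i hi); rewrite e hj.
  rewrite (IH2 kap ok2) der_sum // amul_sumr; apply: eq_big_seq => j hj.
  congr amul; apply: loc => i hi.
  rewrite shift_coord ?(allP a1 i hi) ?(allP a2 j hj) //.
  by apply/eqP => e; move/hasPn: dis => /(_ j hj); rewrite -e hi.
- rewrite /okL cat_uniq all_cat => /andP [/and3P [u1 dis u2] /andP [a1 a2]].
  have ok1 : okL n (dleaves t1) by rewrite /okL u1 a1.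
  have ok2 : okL n (dleaves t2) by rewrite /okL u2 a2.
  rewrite big_cat /= (proj2 Hd); congr (_ + _).
    rewrite (IH1 kap ok1) der_sum // amul_suml; apply: eq_big_seq => j hj.
    congr amul; apply: loc => i hi.
    rewrite shift_coord ?(allP a1 j hj) ?(allP a2 i hi) //.
    by apply/eqP => e; move/hasPn: dis => /(_ i hi); rewrite e hj.
  rewrite (IH2 kap ok2) amul_sumr; apply: eq_big_seq => j hj.
  congr amul; congr d; apply: loc => i hi.
  rewrite shift_coord ?(allP a1 i hi) ?(allP a2 j hj) //.
  by apply/eqP => e; move/hasPn: dis => /(_ j hj); rewrite -e hi.
Qed.

Definition AP := funalg A XX.
Definition aa (j : nat) : AP := fun kap => xk kap j.
Definition F1 (t : dterm) : XX -> A := meval (A:=AP) aa (to_pair t).1.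

Definition dep (F : XX -> A) (L : seq nat) :=
  forall kap kap' : XX, (forall j, j \in L -> kap (zi n j) = kap' (zi n j)) ->
  F kap = F kap'.

Lemma dep_F1 t : dep (F1 t) (dleaves t).
Proof.
rewrite /F1; elim: t => [i|t1 IH1 t2 IH2|t1 IH1 t2 IH2] kap kap' h /=.
- by rewrite /aa /xk h // mem_seq1.
- rewrite /fmul (IH1 kap kap') ?(IH2 kap kap') // => j hj; apply: h;
  by rewrite mem_cat hj ?orbT.
- rewrite /fmul (IH1 kap kap') ?(IH2 kap kap') // => j hj; apply: h;
  by rewrite mem_cat hj ?orbT.
Qed.

Lemma dep_shift (p : {mpoly K[kk n]}) F L : dep F L -> dep (shiftop p F) L.
Proof.
move=> h kap kap' e; rewrite /shiftop; congr lin; apply/funext => m.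
by apply: h => j hj; rewrite !mnmDE e.
Qed.

Lemma fac_l (G H : XX -> A) (p : {mpoly K[kk n]}) kap :
  (forall m, m \in msupp p -> G (kap + m)%MM = G kap) ->
  shiftop p (fun k0 => amul (G k0) (H k0)) kap = amul (G kap) (shiftop p H kap).
Proof.
move=> h; rewrite /shiftop /lin amul_sumr; apply: eq_big_seq => m hm.
by rewrite (h m hm) amulZr.
Qed.
Lemma fac_r (G H : XX -> A) (p : {mpoly K[kk n]}) kap :
  (forall m, m \in msupp p -> G (kap + m)%MM = G kap) ->
  shiftop p (fun k0 => amul (H k0) (G k0)) kap = amul (shiftop p H kap) (G kap).
Proof.
move=> h; rewrite /shiftop /lin amul_suml; apply: eq_big_seq => m hm.
by rewrite (h m hm) amulZl.
Qed.

Lemma sd (p : {mpoly K[kk n]}) (G : XX -> A) L1 L2 :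
  supp p L2 -> dep G L1 -> all (fun j => j < n)%N L1 ->
  (forall j, j \in L1 -> j \notin L2) ->
  forall m, m \in msupp p -> forall kap, G (kap + m)%MM = G kap.
Proof.
move=> sp dg a1 dis m hm kap; apply: dg => j hj.
by rewrite mnmDE (sp m hm j (allP a1 j hj) (dis j hj)) addn0.
Qed.

Lemma shift_Zs L (G : XX -> A) kap :
  shiftop (Zs K n L) G kap = \sum_(j <- L) G (kap + U_(zi n j))%MM.
Proof.
by rewrite /shiftop /Zs lin_sum; apply: eq_bigr => j _; rewrite linX.
Qed.

Lemma main_claim t : okL n (dleaves t) ->
  forall kap, shiftop (T2 K n t) (F1 t) kap = deval d (xk kap) t.
Proof.
elim: t => [i|t1 IH1 t2 IH2|t1 IH1 t2 IH2].
- rewrite /okL /= andbT => hi kap.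
  rewrite /T2 /= /uu shiftX /F1 /= /aa /xk mnmDE mnm1E yz_eq // addn0.
  by [].
- move=> ok; move: (ok); rewrite /okL cat_uniq all_cat.
  move=> /andP [/and3P [u1 dis u2] /andP [a1 a2]].
  have ok1 : okL n (dleaves t1) by rewrite /okL u1 a1.
  have ok2 : okL n (dleaves t2) by rewrite /okL u2 a2.
  have [D1 S1] := @T2_props K n t1 ok1.
  have [D2 S2] := @T2_props K n t2 ok2.
  have dis1 : forall j, j \in dleaves t1 -> j \notin dleaves t2.
    by move=> j hj; apply/negP => hj2; move/hasPn: dis => /(_ j hj2); rewrite hj.
  have dis2 : forall j, j \in dleaves t2 -> j \notin dleaves t1.
    by move=> j hj; move/hasPn: dis => /(_ j hj).
  move=> kap.
  have -> : T2 K n (DPrec t1 t2) = T2 K n t1 * (Zs K n (dleaves t2) * T2 K n t2).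
    by rewrite -D2.
  have -> : F1 (DPrec t1 t2) = fun k0 => amul (F1 t1 k0) (F1 t2 k0) by [].
  rewrite !shift_mul.
  have e1 : shiftop (T2 K n t2) (fun k0 => amul (F1 t1 k0) (F1 t2 k0)) =
            fun k0 => amul (F1 t1 k0) (shiftop (T2 K n t2) (F1 t2) k0).
    apply/funext => k0; apply: fac_l; move=> m hm; apply: (sd S2 (@dep_F1 t1) a1 dis1 hm).
  rewrite e1.
  have e2 : shiftop (Zs K n (dleaves t2))
      (fun k0 => amul (F1 t1 k0) (shiftop (T2 K n t2) (F1 t2) k0)) =
      fun k0 => amul (F1 t1 k0)
        (shiftop (Zs K n (dleaves t2)) (shiftop (T2 K n t2) (F1 t2)) k0).
    apply/funext => k0; apply: fac_l; move=> m hm; apply: (sd (supp_Zs a2) (@dep_F1 t1) a1 dis1 hm).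
  rewrite e2 fac_r; last first.
    move=> m hm; apply: (sd S1 _ a2 dis2 hm).
    by apply: dep_shift; apply: dep_shift; apply: dep_F1.
  rewrite /= (IH1 ok1 kap) shift_Zs (leib kap ok2); congr amul.
  by apply: eq_bigr => j _; rewrite IH2.
- move=> ok; move: (ok); rewrite /okL cat_uniq all_cat.
  move=> /andP [/and3P [u1 dis u2] /andP [a1 a2]].
  have ok1 : okL n (dleaves t1) by rewrite /okL u1 a1.
  have ok2 : okL n (dleaves t2) by rewrite /okL u2 a2.
  have [D1 S1] := @T2_props K n t1 ok1.
  have [D2 S2] := @T2_props K n t2 ok2.
  have dis1 : forall j, j \in dleaves t1 -> j \notin dleaves t2.
    by move=> j hj; apply/negP => hj2; move/hasPn: dis => /(_ j hj2); rewrite hj.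
  have dis2 : forall j, j \in dleaves t2 -> j \notin dleaves t1.
    by move=> j hj; move/hasPn: dis => /(_ j hj).
  move=> kap.
  have -> : T2 K n (DSucc t1 t2) = T2 K n t2 * (Zs K n (dleaves t1) * T2 K n t1).
    by rewrite -D1.
  have -> : F1 (DSucc t1 t2) = fun k0 => amul (F1 t1 k0) (F1 t2 k0) by [].
  rewrite !shift_mul.
  have e1 : shiftop (T2 K n t1) (fun k0 => amul (F1 t1 k0) (F1 t2 k0)) =
            fun k0 => amul (shiftop (T2 K n t1) (F1 t1) k0) (F1 t2 k0).
    apply/funext => k0; apply: fac_r; move=> m hm; apply: (sd S1 (@dep_F1 t2) a2 dis2 hm).
  rewrite e1.
  have e2 : shiftop (Zs K n (dleaves t1))
      (fun k0 => amul (shiftop (T2 K n t1) (F1 t1) k0) (F1 t2 k0)) =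
      fun k0 => amul
        (shiftop (Zs K n (dleaves t1)) (shiftop (T2 K n t1) (F1 t1)) k0) (F1 t2 k0).
    apply/funext => k0; apply: fac_r; move=> m hm; apply: (sd (supp_Zs a1) (@dep_F1 t2) a2 dis2 hm).
  rewrite e2 fac_l; last first.
    move=> m hm; apply: (sd S2 _ a1 dis1 hm).
    by apply: dep_shift; apply: dep_shift; apply: dep_F1.
  rewrite /= (IH2 ok2 kap) shift_Zs (leib kap ok1); congr amul.
  by apply: eq_bigr => j _; rewrite IH1.
Qed.

End MainPart.

Lemma eq_big_all (T : Type) (V : zmodType) (P : pred T) (F G : T -> V) (r : seq T) :
  all P r -> (forall p, P p -> F p = G p) ->
  \sum_(p <- r) F p = \sum_(p <- r) G p.
Proof.
elim: r => [|a r IH] /=; first by rewrite !big_nil.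
by move=> /andP [ha hr] h; rewrite !big_cons h // IH.
Qed.

Theorem mainTheorem12 (K : fieldType) (charK0 : [pchar K] =i pred0)
  (S : mpoly K -> Prop) (HS : multilinear_set S)
  (n : nat) (f : dpoly K) (Hf : dmultilinear n f) :
  VarNov_identity S f -> derived_identity S f.
Proof.
move=> HVN A d HA Hd x.
pose B := fun (F : AP n A) (p : Nalg K n) => lin F p.
have Hbil : bilinear_map B.
  split.
    move=> p c a b; rewrite /B; apply: linF => m; by [].
  by move=> a c p q; rewrite /B linD.
have HV := HVN (AP n A) (Nalg K n) A B (funalg_in_var HA) (Nalg_nov K n) Hbil
  (@aa K n A d x) (uu K n).
apply: etrans HV; apply: (eq_big_all Hf) => p hperm; congr (_ *: _).
have ok : okL n (dleaves p.2).
  rewrite /okL (perm_uniq hperm) iota_uniq /=; apply/allP => j.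
  by rewrite (perm_mem hperm) mem_iota add0n.
have -> : B (meval (@aa K n A d x) (to_pair p.2).1) (meval (uu K n) (to_pair p.2).2)
   = shiftop (T2 K n p.2) (F1 d x p.2) 0%MM.
  by rewrite /B /shiftop; congr lin; apply/funext => m; rewrite add0m.
rewrite (main_claim Hd x ok); congr deval; apply/funext => j.
by rewrite /xk mnm0E.
Qed.
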